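(* Let $(M,d)$ be a pointed metric space. The space $\mathrm{Lip}_0(M)$ has the $w^*$-LD2P if and only if for every finite cyclically monotonic subset $A\subseteq\widetilde M$ and every $\gamma\in(0,1)$ there exist $u,v\in M$ with $u\ne v$ such that $A\cup\{(u,v)\}$ and $A\cup\{(v,u)\}$ are both $\gamma$-cyclically monotonic.
   Context: $M$ has base point $0$; $\mathrm{Lip}_0(M)$ is the real Banach space of Lipschitz $f\colon M\to\mathbb R$ with $f(0)=0$, normed by the best Lipschitz constant. It is the dual of the Lipschitz-free space $\mathcal F(M)$ (norm-closed span of the point evaluations $\delta_x$ in $\mathrm{Lip}_0(M)^*$). $\mathrm{Lip}_0(M)$ has the $w^*$-LD2P if every $w^*$-slice $\{f\in B_{\mathrm{Lip}_0(M)}: \mu(f)>1-\alpha\}$, with $\mu\in\mathcal F(M)$, $\|\mu\|=1$, $\alpha>0$, has diameter $2$. $\widetilde M=\{(x,y)\in M\times M:x\ne y\}$. For $\gamma\in(0,1]$, $A\subseteq\widetilde M$ is $\gamma$-cyclically monotonic if for every finite sequence $(x_1,y_1),\dots,(x_n,y_n)\in A$, with $y_{n+1}=y_1$, $\sum_{i=1}^n\min\{d(x_i,y_{i+1})-\gamma d(x_i,y_i),\,d(y_i,y_{i+1})\}\ge0$; $A$ is cyclically monotonic if for every such sequence $\sum_i d(x_i,y_{i+1})\ge\sum_i d(x_i,y_i)$. *)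

(* Defs.v *)
From HB Require Import structures.
From mathcomp Require Import all_boot all_order all_algebra.
From mathcomp Require Import boolp classical_sets cardinality reals.
Set Implicit Arguments. Unset Strict Implicit. Unset Printing Implicit Defensive.
Import Order.TTheory GRing.Theory Num.Theory.
Local Open Scope classical_set_scope.
Local Open Scope ring_scope.

Section Defs.
Variables (R : realType) (M : Type) (d : M -> M -> R) (z0 : M).

Definition is_metric : Prop :=
  [/\ forall x y, 0 <= d x y,
      forall x y, d x y = 0 <-> x = y,
      forall x y, d x y = d y x &
      forall x y z, d x z <= d x y + d y z].

Definition Lip0 (f : M -> R) : Prop :=
  f z0 = 0 /\ exists L : R, forall x y, `|f x - f y| <= L * d x y.

Definition lipnorm (f : M -> R) : R :=
  sup [set r : R | exists x y : M, x <> y /\ r = `|f x - f y| / d x y].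

Definition BLip0 : set (M -> R) := [set f | Lip0 f /\ lipnorm f <= 1].

(* functionals on Lip_0(M) are modelled as maps (M -> R) -> R; only their
   values on Lip_0(M) (indeed on its unit ball) matter. *)
Definition dualnorm (mu : (M -> R) -> R) : R := sup [set r : R | exists f, BLip0 f /\ r = `|mu f|].

(* finite linear combination  sum_i a_i delta_{x_i} *)
Definition molec (m : seq (R * M)) (f : M -> R) : R :=
  \sum_(p <- m) p.1 * f p.2.

(* mu belongs to F(M): the norm closure of span{delta_x} in Lip_0(M)^*,
   i.e. for each eps > 0 some m in span{delta_x} has ||mu - m|| <= eps *)
Definition in_FM (mu : (M -> R) -> R) : Prop :=
  forall eps : R, 0 < eps -> exists m : seq (R * M),
    forall f, BLip0 f -> `|mu f - molec m f| <= eps.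

Definition wslice (mu : (M -> R) -> R) (alpha : R) : set (M -> R) :=
  [set f | BLip0 f /\ mu f > 1 - alpha].

Definition diam_Lip (S : set (M -> R)) : R :=
  sup [set r : R | exists f g, S f /\ S g /\ r = lipnorm (f \- g)].

Definition wstar_LD2P : Prop :=
  forall (mu : (M -> R) -> R) (alpha : R),
    in_FM mu -> dualnorm mu = 1 -> 0 < alpha ->
    diam_Lip (wslice mu alpha) = 2.

(* pairs (x_1,y_1),...,(x_n,y_n) in A, cyclic index y_{n+1} = y_1 *)
Definition gamma_cyc_mono (gamma : R) (A : set (M * M)) : Prop :=
  forall (n : nat) (x y : nat -> M),
    (forall i, (i < n)%N -> A (x i, y i)) ->
    0 <= \sum_(i < n) Num.min (d (x i) (y ((i.+1) %% n)%N) - gamma * d (x i) (y i))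
                               (d (y i) (y ((i.+1) %% n)%N)).

Definition cyc_mono (A : set (M * M)) : Prop :=
  forall (n : nat) (x y : nat -> M),
    (forall i, (i < n)%N -> A (x i, y i)) ->
    \sum_(i < n) d (x i) (y i) <= \sum_(i < n) d (x i) (y ((i.+1) %% n)%N).

Definition Mtilde : set (M * M) := [set p | p.1 <> p.2].

End Defs.

(* Main.v *)
Require Import Defs.
From HB Require Import structures.
From mathcomp Require Import all_boot all_order all_algebra.
From mathcomp Require Import boolp classical_sets cardinality reals.
From mathcomp Require Import ring lra.
Import Order.TTheory GRing.Theory Num.Theory.
Local Open Scope classical_set_scope.
Local Open Scope ring_scope.
Set Implicit Arguments. Unset Strict Implicit. Unset Printing Implicit Defensive.



Section Basics.
Variables (R : realType) (M : Type) (d : M -> M -> R).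
Hypothesis hd : is_metric d.

Lemma d_ge0 x y : 0 <= d x y. Proof. by case: hd. Qed.
Lemma d_xx x : d x x = 0. Proof. by case: hd => _ h _ _; apply/h. Qed.
Lemma d_sym x y : d x y = d y x. Proof. by case: hd. Qed.
Lemma d_tri x y z : d x z <= d x y + d y z. Proof. by case: hd. Qed.
Lemma d_gt0 x y : x <> y -> 0 < d x y.
Proof.
move=> nxy; rewrite lt_def d_ge0 andbT; apply/eqP => h.
by case: hd => _ h2 _ _; apply: nxy; apply/h2.
Qed.

Lemma cyc_tele n (h : nat -> R) :
  \sum_(i < n) (h i - h ((i.+1) %% n)%N) = 0.
Proof.
rewrite sumrB; apply/eqP; rewrite subr_eq0; apply/eqP.
case: n => [|k]; first by rewrite !big_ord0.
rewrite big_ord_recl big_ord_recr /= modnn addrC; congr (_ + _).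
apply: eq_bigr => i _; rewrite /bump /= add1n modn_small //.
by rewrite ltnS ltn_ord.
Qed.

Definition Gmin (n : nat) (b : nat -> R) (w : nat -> M) (z : M) : R :=
  foldr (fun j acc => Num.min (b j + d z (w j)) acc) (b 0%N + d z (w 0%N)) (iota 0 n).

Lemma foldr_min_le (f : nat -> R) (s : seq nat) j :
  (j \in s) || (j == 0%N) -> foldr (fun j acc => Num.min (f j) acc) (f 0%N) s <= f j.
Proof.
elim: s => [|a s IH] /=; first by move=> /eqP ->.
rewrite in_cons -orbA => /orP [/eqP ->|h]; first by rewrite ge_min lexx.
by rewrite ge_min IH ?orbT.
Qed.

Lemma foldr_min_eq (f : nat -> R) (s : seq nat) :
  exists2 j, (j \in s) || (j == 0%N) & foldr (fun j acc => Num.min (f j) acc) (f 0%N) s = f j.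
Proof.
elim: s => [|a s [j hj IH]] /=; first by exists 0%N.
case: (leP (f a) (foldr (fun j acc => Num.min (f j) acc) (f 0%N) s)) => h.
  by exists a => //; rewrite in_cons eqxx.
exists j => //; by rewrite in_cons; case/orP: hj => ->; rewrite ?orbT.
Qed.

Lemma Gmin_le n b w z j : (j < n)%N -> Gmin n b w z <= b j + d z (w j).
Proof.
move=> hj; rewrite /Gmin; apply: (foldr_min_le (fun j => b j + d z (w j))).
by rewrite mem_iota add0n hj.
Qed.

Lemma Gmin_eq n b w z : (0 < n)%N -> exists2 j, (j < n)%N & Gmin n b w z = b j + d z (w j).
Proof.
move=> n0; have [j hj e] := foldr_min_eq (fun j => b j + d z (w j)) (iota 0 n).
exists j => //; move: hj; rewrite mem_iota add0n => /orP [/andP [] //|/eqP ->//].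
Qed.

Lemma Gmin_lip n b w z z' : (0 < n)%N -> Gmin n b w z - Gmin n b w z' <= d z z'.
Proof.
move=> n0; have [j hj e] := Gmin_eq b w z' n0; rewrite e.
have := Gmin_le b w z hj; have := d_tri z z' (w j); lra.
Qed.

End Basics.


Section Pot.
Variable R : realType.

Definition cyc_cond n (c : nat -> nat -> R) :=
  forall k (p : nat -> nat), (forall l, (l < k)%N -> (p l < n)%N) ->
    0 <= \sum_(l < k) c (p l) (p ((l.+1) %% k)%N).

Fixpoint wc (c : nat -> nat -> R) (i : nat) (s : seq nat) : R :=
  match s with [::] => c i 0%N | j :: s' => c i j + wc c j s' end.

Lemma wc_path c t : forall q,
  \sum_(l < size t) c (nth 0%N (q::t) l) (nth 0%N (q::t) l.+1) + c (last q t) 0%N = wc c q t.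
Proof.
elim: t => [|j t IH] q /=; first by rewrite big_ord0 add0r.
by rewrite big_ord_recl /= -addrA IH.
Qed.

Lemma wc_cycle c n i s : cyc_cond n c -> (0 < n)%N -> (i < n)%N ->
  all (fun x => x < n)%N s -> 0 <= c 0%N i + wc c i s.
Proof.
move=> cc n0 ilt als.
have hall : all (fun x => x < n)%N (0%N :: i :: s) by rewrite /= n0 ilt als.
have := cc (size (0%N :: i :: s)) (fun l => nth 0%N (0%N :: i :: s) l).
have -> : (size (0%N :: i :: s)) = (size (i :: s)).+1 by [].
move=> /(_ _)/wrap[].
  by move=> l hl; apply: (all_nthP 0%N hall).
rewrite big_ord_recr /= modnn.
have -> : \sum_(l < (size s).+1)
     c (nth 0%N [:: 0%N, i & s] l) (nth 0%N [:: 0%N, i & s] ((l.+1) %% (size s).+2)%N)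
   = \sum_(l < size (i :: s))
     c (nth 0%N (0%N :: i :: s) l) (nth 0%N (0%N :: i :: s) l.+1).
  apply: eq_bigr => l _; rewrite modn_small //.
  by rewrite ltnS; apply: ltn_ord.
have -> : nth 0%N (i :: s) (size s) = last 0%N (i :: s).
  by rewrite -nth_last.
by rewrite /= (wc_path c (i :: s) 0%N).
Qed.

Lemma potential n (c : nat -> nat -> R) : cyc_cond n c ->
  exists a : nat -> R, forall i j, (i < n)%N -> (j < n)%N -> a i <= c i j + a j.
Proof.
move=> cc; case: (posnP n) => [->|n0].
  by exists (fun _ => 0) => i j.
pose W i := [set r | exists s, all (fun x => x < n)%N s /\ r = wc c i s].
exists (fun i => inf (W i)) => i j hi hj.
have Wne k : W k !=set0 by exists (wc c k [::]); exists [::].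
have Wlb k : (k < n)%N -> has_lbound (W k).
  move=> hk; exists (- c 0%N k) => r [s [als ->]].
  have := wc_cycle cc n0 hk als; lra.
rewrite -lerBlDl; apply: lb_le_inf => // r [s [als ->]].
rewrite lerBlDl.
have : W i (wc c i (j :: s)) by exists (j :: s); rewrite /= hj als.
by move=> /(ge_inf (Wlb _ hi)).
Qed.

End Pot.

Section PotG.
Variables (R : realType) (M : Type) (d : M -> M -> R).
Hypothesis hd : is_metric d.

Lemma pot_g n (x y : nat -> M) (gamma : R) (c : nat -> nat -> R) :
  (0 < n)%N ->
  (forall i j, c i j <= d (x i) (y j) - gamma * d (x i) (y i)) ->
  cyc_cond n c ->
  exists g : M -> R, (forall z w, g z - g w <= d z w) /\
    forall i, (i < n)%N -> gamma * d (x i) (y i) <= g (x i) - g (y i).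
Proof.
move=> n0 hc cc; have [a ha] := potential cc.
exists (Gmin d n a y); split; first by move=> z w; apply: Gmin_lip.
move=> i hi.
have h1 := Gmin_le d a y (y i) hi; rewrite d_xx // addr0 in h1.
have [j hj ->] := Gmin_eq d a y (x i) n0.
have := ha i j hi hj; have := hc i j; lra.
Qed.

End PotG.


Section Lip.
Variables (R : realType) (M : Type) (d : M -> M -> R) (z0 : M).
Hypothesis hd : is_metric d.
Hypothesis hM : exists a b : M, a <> b.
Let dge0 := d_ge0 hd. Let dgt0 := d_gt0 hd. Let dsym := d_sym hd.
Let dxx := d_xx hd. Let dtri := d_tri hd.

Lemma lip_slope (f : M -> R) x y : (exists L, forall x y, `|f x - f y| <= L * d x y) ->
  x <> y -> `|f x - f y| / d x y <= lipnorm d f.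
Proof.
move=> [L hL] nxy; apply: sup_upper_bound; last by exists x, y.
split; first by exists (`|f x - f y| / d x y), x, y.
exists L => r [a [b [nab ->]]].
by rewrite ler_pdivrMr ?dgt0 //.
Qed.

Lemma lip_le_of (f : M -> R) C : (forall x y, `|f x - f y| <= C * d x y) -> lipnorm d f <= C.
Proof.
move=> hC; have [a [b nab]] := hM.
apply: ge_sup; first by exists (`|f a - f b| / d a b), a, b.
by move=> r [x [y [nxy ->]]]; rewrite ler_pdivrMr ?dgt0.
Qed.

Lemma BLip0P (f : M -> R) : BLip0 d z0 f <-> f z0 = 0 /\ forall x y, f x - f y <= d x y.
Proof.
split.
  move=> [[f0 hL] hn]; split => // x y.
  case: (pselect (x = y)) => [->|nxy]; first by rewrite subrr dge0.
  have := lip_slope hL nxy; rewrite ler_pdivrMr ?dgt0 // => h.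
  apply: le_trans (ler_norm _) _; apply: le_trans h _.
  by rewrite -{2}[d x y]mul1r; apply: ler_wpM2r => //; apply: dge0.
move=> [f0 h].
have hh : forall x y, `|f x - f y| <= 1 * d x y.
  move=> x y; rewrite mul1r ler_norml h andbT.
  by have := h y x; rewrite dsym; lra.
by split; [split => //; exists 1 | apply: lip_le_of].
Qed.

Lemma gcm_of_g (gamma : R) (B : set (M * M)) (g : M -> R) :
  (forall z w, g z - g w <= d z w) ->
  (forall p, B p -> gamma * d p.1 p.2 <= g p.1 - g p.2) ->
  gamma_cyc_mono d gamma B.
Proof.
move=> hg hB n x y hxy.
rewrite -[leLHS](cyc_tele n (fun i => g (y i))); apply: ler_sum => i _.
rewrite le_min; apply/andP; split; last exact: hg.
have := hB _ (hxy i (ltn_ord i)); have := hg (x i) (y ((i.+1) %% n)%N); simpl; lra.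
Qed.

Lemma enum_finite (A : set (M * M)) : finite_set A ->
  exists n (e : nat -> M * M), (forall i, (i < n)%N -> A (e i)) /\
     (forall p, A p -> exists2 i, (i < n)%N & e i = p).
Proof.
move=> /(@finite_seqP {classic (M * M)}) [s hs].
exists (size s), (fun i => nth (z0, z0) s i); split.
  by move=> i hi; rewrite hs /=; apply: mem_nth.
move=> p; rewrite hs /= => ps; exists (@index {classic (M * M)} p s).
  by rewrite index_mem.
exact: (@nth_index {classic (M * M)}).
Qed.

Lemma gcm_to_g (gamma : R) (B : set (M * M)) : finite_set B ->
  gamma_cyc_mono d gamma B ->
  exists g : M -> R, (forall z w, g z - g w <= d z w) /\
    (forall p, B p -> gamma * d p.1 p.2 <= g p.1 - g p.2).
Proof.
move=> /enum_finite [n [e [he1 he2]]] hB.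
case: (posnP n) => [n0|n0].
  exists (fun _ => 0); split; first by move=> z w; rewrite subrr dge0.
  by move=> p /he2 [i]; rewrite n0.
pose x i := (e i).1; pose y i := (e i).2.
pose c i j := Num.min (d (x i) (y j) - gamma * d (x i) (y i)) (d (y i) (y j)).
have hc : forall i j, c i j <= d (x i) (y j) - gamma * d (x i) (y i).
  by move=> i j; rewrite /c ge_min lexx.
have cc : cyc_cond n c.
  move=> k p hp; have := hB k (fun l => x (p l)) (fun l => y (p l)).
  by apply => l hl; rewrite /x /y -surjective_pairing; apply: he1; apply: hp.
have [g [g1 g2]] := @pot_g R M d hd n x y gamma c n0 hc cc.
exists g; split => // p /he2 [i hi <-]; exact: g2.
Qed.

Lemma cyc_to_g (A : set (M * M)) : finite_set A -> cyc_mono d A ->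
  exists g : M -> R, (forall z w, g z - g w <= d z w) /\
    (forall p, A p -> d p.1 p.2 <= g p.1 - g p.2).
Proof.
move=> /enum_finite [n [e [he1 he2]]] hA.
case: (posnP n) => [n0|n0].
  exists (fun _ => 0); split; first by move=> z w; rewrite subrr dge0.
  by move=> p /he2 [i]; rewrite n0.
pose x i := (e i).1; pose y i := (e i).2.
pose c i j := d (x i) (y j) - 1 * d (x i) (y i).
have cc : cyc_cond n c.
  move=> k p hp; rewrite sumrB subr_ge0 /c.
  under eq_bigr do rewrite mul1r.
  have := hA k (fun l => x (p l)) (fun l => y (p l)).
  by apply => l hl; rewrite /x /y -surjective_pairing; apply: he1; apply: hp.
have [g [g1 g2]] := @pot_g R M d hd n x y 1 c n0 (fun i j => lexx _) cc.
exists g; split => // p /he2 [i hi <-]; rewrite -[d _ _]mul1r; exact: g2.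
Qed.

End Lip.


Section Molec.
Variables (R : realType) (M : Type).
Lemma molec_nil (f : M -> R) : molec [::] f = 0.
Proof. by rewrite /molec big_nil. Qed.
Lemma molec_cat (m1 m2 : seq (R * M)) f : molec (m1 ++ m2) f = molec m1 f + molec m2 f.
Proof. by rewrite /molec big_cat. Qed.
Lemma molec_big n (F : nat -> seq (R * M)) f :
  molec (\big[cat/[::]]_(k < n) F k) f = \sum_(k < n) molec (F k) f.
Proof.
elim: n => [|n IH]; first by rewrite !big_ord0 molec_nil.
by rewrite !big_ord_recr /= molec_cat IH.
Qed.
End Molec.

Section Dir1.
Variables (R : realType) (M : Type) (d : M -> M -> R) (z0 : M).
Hypothesis hd : is_metric d.
Hypothesis hM : exists a b : M, a <> b.
Let dge0 := d_ge0 hd. Let dgt0 := d_gt0 hd. Let dsym := d_sym hd.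
Let dxx := d_xx hd. Let dtri := d_tri hd.

Lemma BLip0_abs f x y : BLip0 d z0 f -> `|f x - f y| <= d x y.
Proof.
move=> /(BLip0P z0 hd hM) [_ h]; rewrite ler_norml h andbT.
by have := h y x; rewrite dsym; lra.
Qed.

Lemma dir1 : wstar_LD2P d z0 ->
  (forall (A : set (M * M)) (gamma : R),
     finite_set A -> A `<=` @Mtilde M -> cyc_mono d A ->
     0 < gamma < 1 ->
     exists u v : M, u <> v /\
       gamma_cyc_mono d gamma (A `|` [set (u, v)]) /\
       gamma_cyc_mono d gamma (A `|` [set (v, u)])).
Proof.
move=> LD A gamma fA sA cA /andP [gam0 gam1].
have [n [e [he1 he2]]] := enum_finite z0 fA.
case: (posnP n) => [n0 | n0].
  have [a [b nab]] := hM; exists a, b; split => //.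
  have key u v : gamma_cyc_mono d gamma (A `|` [set (u, v)]).
    apply: (gcm_of_g (g := fun z => d z v)).
      by move=> z w; have := dtri z w v; lra.
    move=> p [/he2 [i]|->]; first by rewrite n0.
    rewrite /= dxx subr0; have := dge0 u v; nra.
  by split; apply: key.
pose x k := (e k).1; pose y k := (e k).2.
have dkp k : (k < n)%N -> 0 < d (x k) (y k).
  by move=> hk; apply: dgt0; apply: (sA _ (he1 _ hk)).
pose c k := (n%:R * d (x k) (y k))^-1.
pose m := \big[cat/[::]]_(k < n) [:: (c k, x k); (- c k, y k)].
pose mu := molec m.
have muE f : mu f = \sum_(k < n) c k * (f (x k) - f (y k)).
  rewrite /mu /m (molec_big n (fun k => [:: (c k, x k); (- c k, y k)])); apply: eq_bigr => k _.
  by rewrite /molec !big_cons big_nil /=; ring.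
have nR : 0 < n%:R :> R by rewrite ltr0n.
have term f k : (k < n)%N -> BLip0 d z0 f -> c k * (f (x k) - f (y k)) <= n%:R^-1.
  move=> hk bf; have := BLip0_abs (x k) (y k) bf; rewrite ler_norml => /andP [_ h].
  have dk := dkp k hk.
  have ck : 0 <= c k by rewrite /c invr_ge0 mulr_ge0 // ltW.
  apply: (@le_trans _ _ (c k * d (x k) (y k))); first by rewrite ler_wpM2l.
  by rewrite /c invfM divfK // gt_eqF.
have sumq : \sum_(k < n) (n%:R^-1 : R) = 1.
  by rewrite sumr_const card_ord -(mulr_natr (n%:R^-1)) mulVf // gt_eqF.
have ub f : BLip0 d z0 f -> `|mu f| <= 1.
  move=> bf; rewrite muE -sumq; apply: le_trans (ler_norm_sum _ _ _) _.
  apply: ler_sum => k _.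
  have hk := ltn_ord k.
  have ck : 0 <= c k by rewrite /c invr_ge0 mulr_ge0 // ?ltW // dkp.
  rewrite normrM (ger0_norm ck).
  have := term f k hk bf; have := term (fun z => - f z) k hk.
  have bf' : BLip0 d z0 (fun z => - f z).
    move: bf => /(BLip0P z0 hd hM) [f0 h]; apply/(BLip0P z0 hd hM); split.
      by rewrite f0 oppr0.
    by move=> a b; have := h b a; rewrite dsym; lra.
  move=> /(_ bf') h2 h1.
  case: (lerP 0 (f (x k) - f (y k))) => hs.
    by rewrite ger0_norm.
  rewrite ltr0_norm //.
  have -> : c k * - (f (x k) - f (y k)) = c k * (- f (x k) - - f (y k)) by ring.
  exact: h2.
have [g [g1 g2]] := cyc_to_g z0 hd fA cA.
pose fs z := g z - g z0.
have bfs : BLip0 d z0 fs.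
  apply/(BLip0P z0 hd hM); split; first by rewrite /fs subrr.
  by move=> a b; rewrite /fs; have := g1 a b; lra.
have mufs : mu fs = 1.
  rewrite muE -sumq; apply: eq_bigr => k _.
  have hk := ltn_ord k.
  have e1 : fs (x k) - fs (y k) = d (x k) (y k).
    apply/eqP; rewrite eq_le; apply/andP; split.
      by rewrite /fs; have := g1 (x k) (y k); lra.
    have := g2 _ (he1 _ hk); rewrite /fs /x /y; lra.
  by rewrite e1 /c invfM divfK // gt_eqF // dkp.
have dn1 : dualnorm d z0 mu = 1.
  apply/eqP; rewrite eq_le; apply/andP; split.
    apply: ge_sup; first by exists (`|mu fs|), fs.
    by move=> r [f [bf ->]]; apply: ub.
  have -> : (1 : R) = `|mu fs| by rewrite mufs normr1.
  apply: sup_upper_bound; last by exists fs.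
  split; first by exists (`|mu fs|), fs.
  by exists 1 => r [f [bf ->]]; apply: ub.
have hFM : in_FM d z0 mu.
  by move=> eps eps0; exists m => f _; rewrite /mu subrr normr0 ltW.
pose alpha := (1 - gamma) / n%:R.
have al0 : 0 < alpha by rewrite /alpha divr_gt0 // subr_gt0.
have D := LD mu alpha hFM dn1 al0.
have good f : BLip0 d z0 f -> mu f > 1 - alpha ->
    forall k, (k < n)%N -> gamma * d (x k) (y k) <= f (x k) - f (y k).
  move=> bf hmu k hk; rewrite leNgt; apply/negP => hlt.
  have tk : c k * (f (x k) - f (y k)) < gamma * n%:R^-1.
    have dk := dkp k hk.
    have -> : gamma * n%:R^-1 = c k * (gamma * d (x k) (y k)).
      by rewrite /c invfM; field; rewrite !gt_eqF.
    by rewrite ltr_pM2l // /c invr_gt0 mulr_gt0.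
  have hsum : \sum_(j < n) (n%:R^-1 - c j * (f (x j) - f (y j))) = 1 - mu f.
    by rewrite sumrB sumq muE.
  have : n%:R^-1 - c k * (f (x k) - f (y k)) <= 1 - mu f.
    rewrite -hsum (bigD1 (Ordinal hk)) //= lerDl; apply: sumr_ge0 => j _.
    by rewrite subr_ge0; apply: term.
  have : alpha = n%:R^-1 - gamma * n%:R^-1 by rewrite /alpha; field; rewrite gt_eqF.
  lra.
have tightB (f : M -> R) u v : BLip0 d z0 f -> mu f > 1 - alpha ->
    gamma * d u v <= f u - f v -> gamma_cyc_mono d gamma (A `|` [set (u, v)]).
  move=> bf hmu huv; apply: (gcm_of_g (g := f)).
    by move: bf => /(BLip0P z0 hd hM) [].
  move=> p [/he2 [i hi <-]|->] //.
  exact: good.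
pose T := [set r | exists f g : M -> R, wslice d z0 mu alpha f /\ wslice d z0 mu alpha g /\
     r = lipnorm d (f \- g)].
have DT : sup T = 2 by exact: D.
have hT : has_sup T.
  apply: contrapT => hT; move: DT; rewrite sup_out //.
  by move/eqP; rewrite eq_sym pnatr_eq0.
have g01 : 0 < 1 - gamma by rewrite subr_gt0.
have [r [f [h [[bf mf] [[bh mh] ->]]]] hr] := sup_adherent g01 hT.
rewrite DT in hr.
have [u [v [nuv huv]]] : exists (u : M) (v : M), u <> v /\ (1 + gamma) * d u v < `|(f \- h) u - (f \- h) v|.
  apply: contrapT => H.
  have : lipnorm d (f \- h) <= 1 + gamma.
    apply: (lip_le_of hd hM) => a b.
    case: (pselect (a = b)) => [->|nab]; first by rewrite subrr normr0 mulr_ge0 // ?dge0 //; lra.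
    by rewrite leNgt; apply/negP => hlt; apply: H; exists a, b.
  lra.
move: huv; rewrite /= => huv.
have f1 := BLip0_abs u v bf; have h1 := BLip0_abs u v bh.
rewrite ler_norml in f1; rewrite ler_norml in h1.
move/andP: f1 => [f1 f2]; move/andP: h1 => [h1 h2].
exists u, v; split => //.
case: (lerP 0 (f u - h u - (f v - h v))) => hs.
  rewrite ger0_norm // in huv.
  split; [apply: (tightB f) | apply: (tightB h)] => //.
    lra.
  rewrite dsym; lra.
rewrite ltr0_norm // in huv.
split; [apply: (tightB h) | apply: (tightB f)] => //.
  lra.
rewrite dsym; lra.
Qed.

End Dir1.

From mathcomp Require Import topology matrix_topology normedtype matrix_normedtype derive.
Import numFieldNormedType.Exports.
Local Open Scope classical_set_scope.
Local Open Scope ring_scope.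


Section Comp.
Variable R : realType.

Lemma coordB_cont k (i j : 'I_k) :
  continuous (fun v : 'rV[R]_k => v ord0 i - v ord0 j).
Proof.
move=> v; apply: continuousB; [exact: coord_continuous | exact: coord_continuous].
Qed.

Lemma lincomb_cont k L (a : nat -> R) (idx : nat -> 'I_k) :
  continuous (fun v : 'rV[R]_k => \sum_(j < L) a j * v ord0 (idx j)).
Proof.
elim: L => [|L IH].
  by under eq_fun do rewrite big_ord0; move=> v; apply: cst_continuous.
under eq_fun do rewrite big_ord_recr /=.
move=> v.
apply: (@continuousD _ _ _ (fun v : 'rV[R]_k => \sum_(j < L) a j * v ord0 (idx j))
   (fun v : 'rV[R]_k => a L * v ord0 (idx L))); first exact: IH.
apply: (@continuousM _ _ (fun _ => a L) (fun v : 'rV[R]_k => v ord0 (idx L))).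
  exact: cst_continuous.
exact: coord_continuous.
Qed.

Lemma max_on_K k (D : 'I_k -> 'I_k -> R) (Phi : 'rV[R]_k -> R) (i0 : 'I_k) :
  (forall i j, 0 <= D i j) ->
  continuous Phi ->
  exists2 v : 'rV[R]_k, (v ord0 i0 = 0 /\ forall i j, v ord0 i - v ord0 j <= D i j) &
    forall w : 'rV[R]_k, (w ord0 i0 = 0 /\ forall i j, w ord0 i - w ord0 j <= D i j) ->
      Phi w <= Phi v.
Proof.
move=> D0 cPhi.
pose K := [set v : 'rV[R]_k | v ord0 i0 = 0 /\ forall i j, v ord0 i - v ord0 j <= D i j].
have K0 : K !=set0 by exists 0; split => [|i j]; rewrite ?mxE ?subrr.
have Keq : K = [set v : 'rV[R]_k | v ord0 i0 = 0] `&`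
   \bigcap_(ij in [set: 'I_k * 'I_k]) [set v : 'rV[R]_k | v ord0 ij.1 - v ord0 ij.2 <= D ij.1 ij.2].
  apply/seteqP; split => v /=.
    by move=> [h1 h2]; split => // -[i j] _; apply: h2.
  by move=> [h1 h2]; split => // i j; apply: (h2 (i, j)).
have Kcl : closed K.
  rewrite Keq; apply: closedI.
    apply: (@preimage_closed _ _ (fun v : 'rV[R]_k => v ord0 i0) [set x | x = 0]).
      by move=> x _; apply: coord_continuous.
    exact: closed_eq.
  apply: closed_bigI => -[i j] _.
  apply: (@preimage_closed _ _ (fun v : 'rV[R]_k => v ord0 i - v ord0 j) [set x | x <= D i j]).
    by move=> x _; apply: coordB_cont.
  exact: closed_le.
have Kco : compact K.
  have Bco := @rV_compact R k (fun i => `[- D i0 i, D i i0]%classic)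
     (fun i => @segment_compact R (- D i0 i) (D i i0)).
  apply: (subclosed_compact Kcl Bco).
  move=> v [h1 h2] i /=; rewrite in_itv /=.
  have := h2 i i0; have := h2 i0 i; rewrite h1 => ha hb; apply/andP; split; lra.
have [v Kv hv] := compact_EVT_max K0 Kco (@continuous_subspaceT _ _ K Phi cPhi).
exists v; first by move: Kv; rewrite inE.
by move=> w Kw; apply: hv; rewrite inE.
Qed.

End Comp.


Section Points.
Variables (R : realType) (M : Type) (d : M -> M -> R) (z0 : M).
Hypothesis hd : is_metric d.
Hypothesis hM : exists a b : M, a <> b.
Let dge0 := d_ge0 hd. Let dgt0 := d_gt0 hd. Let dsym := d_sym hd.
Let dxx := d_xx hd. Let dtri := d_tri hd.
Variable m : seq (R * M).

Definition kk := (size m).+1.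
Definition sP := z0 :: map snd m.
Definition PP (i : 'I_kk) := nth z0 sP i.
Definition Kv (v : 'rV[R]_kk) := v ord0 ord0 = 0 /\ forall i j, v ord0 i - v ord0 j <= d (PP i) (PP j).
Definition Phi (v : 'rV[R]_kk) := \sum_(j < size m) (nth (0, z0) m j).1 * v ord0 (inord j.+1).
Definition rv (h : M -> R) : 'rV[R]_kk := \row_(i < kk) h (PP i).
Definition Ext (v : 'rV[R]_kk) : M -> R :=
  Gmin d kk (fun j => v ord0 (inord j)) (fun j => nth z0 sP j).

Lemma PP0 : PP ord0 = z0. Proof. by []. Qed.

Lemma molec_nth (h : M -> R) :
  molec m h = \sum_(j < size m) (nth (0, z0) m j).1 * h (nth (0, z0) m j).2.
Proof. by rewrite /molec (big_nth (0, z0)) big_mkord. Qed.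

Lemma Phi_rv h : Phi (rv h) = molec m h.
Proof.
rewrite molec_nth /Phi; apply: eq_bigr => j _; rewrite mxE /PP inordK; last first.
  by rewrite /kk ltnS ltn_ord.
by rewrite /sP /= (nth_map (0, z0)).
Qed.

Lemma ext_val v : Kv v -> forall i, Ext v (PP i) = v ord0 i.
Proof.
move=> [v0 hv] i; apply/eqP; rewrite eq_le; apply/andP; split.
  have := @Gmin_le R M d kk (fun j => v ord0 (inord j)) (fun j => nth z0 sP j) (PP i) i (ltn_ord i).
  by rewrite inord_val -/(PP i) dxx addr0.
rewrite /Ext; have [j hj ->] := @Gmin_eq R M d kk (fun j => v ord0 (inord j)) (fun j => nth z0 sP j) (PP i) isT.
have -> : nth z0 sP j = PP (inord j) by rewrite /PP inordK.
have := hv i (inord j); lra.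
Qed.

Lemma ext_BLip v : Kv v -> BLip0 d z0 (Ext v).
Proof.
move=> Kvv; apply/(BLip0P z0 hd hM); split.
  by rewrite -PP0 ext_val //; case: Kvv.
by move=> x y; apply: Gmin_lip.
Qed.

Lemma rv_K f : BLip0 d z0 f -> Kv (rv f).
Proof.
move=> /(BLip0P z0 hd hM) [f0 hf]; split; first by rewrite mxE PP0.
by move=> i j; rewrite !mxE.
Qed.

Lemma rv_ext v : Kv v -> rv (Ext v) = v.
Proof. by move=> Kvv; apply/rowP => i; rewrite mxE ext_val // [ord0]ord1. Qed.

Lemma exists_opt : exists fs, BLip0 d z0 fs /\
  forall h, Kv (rv h) -> molec m h <= molec m fs.
Proof.
have cPhi : continuous Phi.
  exact: (@lincomb_cont R kk (size m) (fun j => (nth (0, z0) m j).1) (fun j => inord j.+1)).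
have [v Kvv hv] := @max_on_K R kk (fun i j => d (PP i) (PP j)) Phi ord0 (fun i j => dge0 _ _) cPhi.
exists (Ext v); split; first exact: ext_BLip.
move=> h Kh; rewrite -Phi_rv -(Phi_rv (Ext v)) rv_ext //; exact: hv.
Qed.

End Points.


Section ExT.
Variable R : realType.
Lemma exists_t (I : finType) (Q : R -> I -> Prop) :
  (forall i, exists t, 0 < t /\ forall t', 0 < t' <= t -> Q t' i) ->
  exists t, 0 < t /\ forall i, Q t i.
Proof.
move=> H.
suff key : forall s : seq I, exists t, 0 < t /\
    forall i, i \in s -> forall t', 0 < t' <= t -> Q t' i.
  have [t [t0 ht]] := key (enum I).
  by exists t; split => // i; apply: ht; [rewrite mem_enum | rewrite t0 lexx].
elim => [|a s [ts [ts0 hts]]]; first by exists 1; split.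
have [ta [ta0 hta]] := H a.
exists (Num.min ta ts); split; first by rewrite lt_min ta0 ts0.
move=> i; rewrite in_cons => /orP [/eqP ->|iin] t' /andP [t'0]; rewrite le_min => /andP [h1 h2].
  by apply: hta; rewrite t'0 h1.
by apply: hts => //; rewrite t'0 h2.
Qed.
End ExT.

Section MolecLin.
Variables (R : realType) (M : Type).
Lemma molec_lin (m : seq (R * M)) a b f g :
  molec m (fun z => a * f z + b * g z) = a * molec m f + b * molec m g.
Proof.
rewrite /molec !mulr_sumr -big_split; apply: eq_bigr => p _ /=; ring.
Qed.
End MolecLin.

Section Perturb.
Variables (R : realType) (M : Type) (d : M -> M -> R) (z0 : M).
Hypothesis hd : is_metric d.
Hypothesis hM : exists a b : M, a <> b.
Let dge0 := d_ge0 hd. Let dgt0 := d_gt0 hd. Let dsym := d_sym hd.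
Let dxx := d_xx hd. Let dtri := d_tri hd.
Variable m : seq (R * M).
Variable fs : M -> R.
Hypothesis hfs : BLip0 d z0 fs.
Hypothesis opt : forall h, Kv d z0 (rv z0 m h) -> molec m h <= molec m fs.

Definition Aset := [set p : M * M | (exists i j : 'I_(kk m), p = (PP z0 i, PP z0 j)) /\
   p.1 <> p.2 /\ fs p.1 - fs p.2 = d p.1 p.2].

Lemma fsL a b : fs a - fs b <= d a b.
Proof. by move: hfs => /(BLip0P z0 hd hM) [_]; apply. Qed.
Lemma fs0 : fs z0 = 0.
Proof. by move: hfs => /(BLip0P z0 hd hM) []. Qed.

Lemma A_finite : finite_set Aset.
Proof.
apply: (@sub_finite_set _ _ ((fun ij : 'I_(kk m) * 'I_(kk m) => (PP z0 ij.1, PP z0 ij.2)) @` setT)).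
  by move=> p [[i [j ->]] _]; exists (i, j).
by apply: finite_image; exact: finite_finset.
Qed.

Lemma A_sub : Aset `<=` @Mtilde M.
Proof. by move=> p [_ []]. Qed.

Lemma A_cyc : cyc_mono d Aset.
Proof.
move=> n x y hA.
have e1 : \sum_(i < n) d (x i) (y i) = \sum_(i < n) (fs (x i) - fs (y i)).
  by apply: eq_bigr => i _; have [_ [_ ->]] := hA i (ltn_ord i).
rewrite e1; apply: (@le_trans _ _ (\sum_(i < n) (fs (x i) - fs (y ((i.+1) %% n)%N)))).
  have := cyc_tele n (fun i => fs (y i)); rewrite !sumrB => h; lra.
by apply: ler_sum => i _; apply: fsL.
Qed.

Lemma perturb (gamma : R) (g : M -> R) : 0 < gamma < 1 ->
  (forall z w, g z - g w <= d z w) -> g z0 = 0 ->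
  (forall p, Aset p -> gamma * d p.1 p.2 <= g p.1 - g p.2) ->
  gamma * molec m fs <= molec m g.
Proof.
move=> /andP [ga0 ga1] gL gz0 gA.
pose P := @PP R M z0 m.
have [t [t0 ht]] : exists t, 0 < t /\ forall ij : 'I_(kk m) * 'I_(kk m),
    fs (P ij.1) - fs (P ij.2) < d (P ij.1) (P ij.2) ->
    (1 + t) * (fs (P ij.1) - fs (P ij.2)) + t * d (P ij.1) (P ij.2) <= d (P ij.1) (P ij.2).
  apply: exists_t => -[i j] /=.
  set D := d (P i) (P j); set de := fs (P i) - fs (P j).
  have D0 : 0 <= D by apply: dge0.
  have deD : - D <= de by have := fsL (P j) (P i); rewrite /de /D dsym; lra.
  case: (ltP de D) => hde; last first.
    by exists 1; split => // t' _ h; exfalso; lra.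
  have den : 0 < 2 * D + 1 by lra.
  exists ((D - de) / (2 * D + 1)); split; first by rewrite divr_gt0 // subr_gt0.
  move=> t' /andP [t'0 t'le] _.
  have e : (D - de) / (2 * D + 1) * (2 * D + 1) = D - de by rewrite divfK // gt_eqF.
  have h1 : t' * (de + D) <= (D - de) / (2 * D + 1) * (de + D).
    by apply: ler_wpM2r => //; lra.
  have h2 : (D - de) / (2 * D + 1) * (de + D) <= (D - de) / (2 * D + 1) * (2 * D + 1).
    apply: ler_wpM2l; [by rewrite divr_ge0 //; lra | lra].
  nra.
pose lam := 1 + t * (1 - gamma).
have lam0 : 0 < lam.
  have : 0 < t * (1 - gamma) by rewrite mulr_gt0 // subr_gt0.
  rewrite /lam; lra.
pose a := (1 + t) / lam. pose b := - t / lam.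
pose psi z := a * fs z + b * g z.
have Kpsi : Kv d z0 (rv z0 m psi).
  split; first by rewrite mxE PP0 /psi fs0 gz0 !mulr0 addr0.
  move=> i j; rewrite !mxE.
  have -> : psi (PP z0 i) - psi (PP z0 j) =
     ((1 + t) * (fs (P i) - fs (P j)) - t * (g (P i) - g (P j))) / lam.
    by rewrite /psi /a /b /P; field; rewrite gt_eqF.
  rewrite ler_pdivrMr // -/(P i) -/(P j).
  have hfd : fs (P i) - fs (P j) <= d (P i) (P j) by apply: fsL.
  have tg : 0 <= t * (1 - gamma) * d (P i) (P j).
    apply: mulr_ge0; last exact: dge0.
    by apply: mulr_ge0; [exact: ltW | rewrite subr_ge0 ltW].
  case: (ltP (fs (P i) - fs (P j)) (d (P i) (P j))) => hlt.
    have := ht (i, j) hlt => /= h.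
    have : - (t * (g (P i) - g (P j))) <= t * d (P i) (P j).
      rewrite -mulrN; apply: ler_wpM2l; first exact: ltW.
      by have := gL (P j) (P i); rewrite dsym; lra.
    rewrite /lam; nra.
  have eq : fs (P i) - fs (P j) = d (P i) (P j) by apply/eqP; rewrite eq_le hfd hlt.
  case: (pselect (P i = P j)) => [e|ne].
    by rewrite e !subrr dxx !mulr0 mul0r subrr.
  have hA : Aset (P i, P j).
    by rewrite /Aset /=; split; [exists i, j | split].
  have := gA _ hA => /= hg.
  have : t * (gamma * d (P i) (P j)) <= t * (g (P i) - g (P j)).
    by apply: ler_wpM2l => //; apply: ltW.
  rewrite eq /lam; nra.
have := opt Kpsi; rewrite molec_lin.
set N := molec m fs; set G := molec m g => h.
have h2 : (1 + t) * N - t * G <= lam * N.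
  have -> : (1 + t) * N - t * G = lam * (a * N + b * G).
    by rewrite /a /b; field; rewrite gt_eqF.
  by apply: ler_wpM2l => //; apply: ltW.
have : 0 <= t * (G - gamma * N) by rewrite /lam in h2; nra.
by rewrite pmulr_rge0 // subr_ge0.
Qed.

End Perturb.


Section Dir2.
Variables (R : realType) (M : Type) (d : M -> M -> R) (z0 : M).
Hypothesis hd : is_metric d.
Hypothesis hM : exists a b : M, a <> b.
Let dge0 := d_ge0 hd. Let dgt0 := d_gt0 hd. Let dsym := d_sym hd.
Let dxx := d_xx hd. Let dtri := d_tri hd.

Lemma BLip0_opp f : BLip0 d z0 f -> BLip0 d z0 (fun z => - f z).
Proof.
move=> /(BLip0P z0 hd hM) [f0 h]; apply/(BLip0P z0 hd hM); split.
  by rewrite f0 oppr0.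
by move=> a b; have := h b a; rewrite dsym; lra.
Qed.

Lemma molec_opp (m : seq (R * M)) f : molec m (fun z => - f z) = - molec m f.
Proof. by rewrite /molec -sumrN; apply: eq_bigr => p _; rewrite mulrN. Qed.

Lemma dir2 :
  (forall (A : set (M * M)) (gamma : R),
     finite_set A -> A `<=` @Mtilde M -> cyc_mono d A ->
     0 < gamma < 1 ->
     exists u v : M, u <> v /\
       gamma_cyc_mono d gamma (A `|` [set (u, v)]) /\
       gamma_cyc_mono d gamma (A `|` [set (v, u)])) ->
  wstar_LD2P d z0.
Proof.
move=> H mu alpha hFM dn1 al0.
pose T := [set r | exists f g : M -> R, wslice d z0 mu alpha f /\ wslice d z0 mu alpha g /\
     r = lipnorm d (f \- g)].
suff : sup T = 2 by [].
have ub2 : forall r, T r -> r <= 2.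
  move=> r [f [g [[bf _] [[bg _] ->]]]]; apply: (lip_le_of hd hM) => x y /=.
  have := BLip0_abs hd hM x y bf; have := BLip0_abs hd hM x y bg.
  have -> : f x - g x - (f y - g y) = (f x - f y) - (g x - g y) by ring.
  have := ler_normB (f x - f y) (g x - g y); lra.
suff lb : forall beta, 0 < beta -> exists2 r, T r & 2 - beta <= r.
  have [r0 Tr0 _] := lb 1 ltr01.
  have hs : has_sup T by split; [exists r0 | exists 2].
  apply/eqP; rewrite eq_le; apply/andP; split; first by apply: ge_sup => //; exists r0.
  rewrite leNgt; apply/negP => hlt.
  have hp : 0 < (2 - sup T) / 2 by rewrite divr_gt0 // subr_gt0.
  have [r Tr hr] := lb ((2 - sup T) / 2) hp.
  have := sup_upper_bound hs Tr; lra.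
move=> beta b0.
pose eps := Num.min alpha 1 / 4.
have e0 : 0 < eps by rewrite /eps divr_gt0 // lt_min al0 ltr01.
have ea : 4 * eps <= alpha.
  by rewrite /eps mulrC divfK ?pnatr_eq0 // ge_min lexx.
have e14 : eps <= 1 / 4.
  by rewrite /eps ler_pM2r ?invr_gt0 ?ltr0n // ge_min lexx orbT.
have [m hm] := hFM eps e0.
pose S := [set r | exists f, BLip0 d z0 f /\ r = `|mu f|].
have dnS : sup S = 1 by exact: dn1.
have hS : has_sup S.
  apply: contrapT => hS; move: dnS; rewrite sup_out //.
  by move/eqP; rewrite eq_sym oner_eq0.
have [r1 [f0 [bf0 ->]] hr1] := sup_adherent e0 hS.
rewrite dnS in hr1.
have hm0 := hm f0 bf0.
have dist := lerB_dist (mu f0) (molec m f0).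
have [f1 [bf1 hf1]] : exists f1, BLip0 d z0 f1 /\ 1 - 2 * eps <= molec m f1.
  case: (lerP 0 (molec m f0)) => hs.
    by exists f0; split => //; rewrite (ger0_norm hs) in dist; lra.
  exists (fun z => - f0 z); split; first exact: BLip0_opp.
  by rewrite molec_opp; rewrite (ltr0_norm hs) in dist; lra.
have [fs [bfs opt]] := exists_opt z0 hd hM m.
set N := molec m fs.
have N1 : 1 - 2 * eps <= N by apply: le_trans hf1 _; apply: opt; apply: rv_K.
pose eta := Num.min (beta / 2) (eps / 2).
have et0 : 0 < eta by rewrite lt_min; apply/andP; split; apply: divr_gt0.
have etb : eta <= beta / 2 by rewrite ge_min lexx.
have ete : eta <= eps / 2 by rewrite ge_min lexx orbT.
pose gamma := 1 - eta.
have hg : 0 < gamma < 1 by apply/andP; split; rewrite /gamma; lra.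
have mk : forall u v : M, gamma_cyc_mono d gamma (Aset d z0 m fs `|` [set (u, v)]) ->
    exists g, wslice d z0 mu alpha g /\ gamma * d u v <= g u - g v.
  move=> u v Bc.
  have fB : finite_set (Aset d z0 m fs `|` [set (u, v)]).
    by rewrite finite_setU; split; [exact: A_finite | exact: finite_set1].
  have [g [gL gB]] := gcm_to_g z0 hd fB Bc.
  pose g' z := g z - g z0.
  have gL' : forall z w, g' z - g' w <= d z w.
    by move=> z w; rewrite /g'; have := gL z w; lra.
  have g'0 : g' z0 = 0 by rewrite /g' subrr.
  have bg' : BLip0 d z0 g' by apply/(BLip0P z0 hd hM); split.
  have gA : forall p, Aset d z0 m fs p -> gamma * d p.1 p.2 <= g' p.1 - g' p.2.
    by move=> p Ap; rewrite /g'; have := gB p (or_introl Ap); lra.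
  have pg := perturb hd hM bfs opt hg gL' g'0 gA.
  exists g'; split.
    split => //.
    have := hm g' bg'; rewrite ler_norml => /andP [hm1 _].
    have : gamma * (1 - 2 * eps) <= gamma * N.
      by apply: ler_wpM2l => //; rewrite /gamma; lra.
    move=> hh.
    have eqg : gamma * (1 - 2 * eps) = 1 - 2 * eps - eta + 2 * (eta * eps).
      by rewrite /gamma; ring.
    have : 0 <= eta * eps by rewrite mulr_ge0 // ltW.
    move: pg; rewrite -/N; lra.
  by rewrite /g'; have := gB (u, v) (or_intror erefl); simpl; lra.
have [u [v [nuv [B1 B2]]]] := H (Aset d z0 m fs) gamma (A_finite d z0 m fs)
  (@A_sub R M d z0 m fs) (A_cyc hd hM bfs) hg.
have [g [sg hgu]] := mk u v B1.
have [h [sh hhv]] := mk v u B2.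
exists (lipnorm d (g \- h)); first by exists g, h.
have hL : exists L, forall x y, `|(g \- h) x - (g \- h) y| <= L * d x y.
  exists 2 => x y /=.
  have := BLip0_abs hd hM x y sg.1; have := BLip0_abs hd hM x y sh.1.
  have -> : g x - h x - (g y - h y) = (g x - g y) - (h x - h y) by ring.
  have := ler_normB (g x - g y) (h x - h y); lra.
apply: le_trans (lip_slope hd hL nuv).
rewrite ler_pdivlMr ?dgt0 //=.
rewrite dsym in hhv.
have := ler_norm (g u - h u - (g v - h v)).
have := dge0 u v.
rewrite /gamma in hgu hhv; nra.
Qed.

End Dir2.


Theorem proposition4p3 (R : realType) (M : Type) (d : M -> M -> R) (z0 : M)
  (hd : is_metric d) (hM : exists a b : M, a <> b) :
  wstar_LD2P d z0 <->
  (forall (A : set (M * M)) (gamma : R),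
     finite_set A -> A `<=` @Mtilde M -> cyc_mono d A ->
     0 < gamma < 1 ->
     exists u v : M, u <> v /\
       gamma_cyc_mono d gamma (A `|` [set (u, v)]) /\
       gamma_cyc_mono d gamma (A `|` [set (v, u)])).
Proof.
split; [exact: (dir1 hd hM) | exact: (dir2 hd hM)].
Qed.
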